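(* The Lie subalgebra $\Lambda_1(\mathbb{Q}\mathrm{Tree}_2)=\bigoplus_{m\ge2}\mathbb{Q}\mathrm{Tree}_2((m))$ of $\Lambda(\mathbb{Q}\mathrm{Tree}_2^-)$ is not finitely generated.
   Context: $\mathrm{Tree}_2((m))$, $m\ge1$, is the set of planar binary rooted trees with one root and $m$ leaves labeled $1,\dots,m$ from left to right, equivalently full parenthesizations of $12\cdots m$; $\mathrm{Tree}_2((1))=\{1\}$. Composition $S\circ_iT$ grafts the root of $T$ onto the $i$-th leaf of $S$. The operad $\mathrm{Tree}_2^-$ has $\mathrm{Tree}_2^-((0))=\{\circ\}$, $\mathrm{Tree}_2^-((m))=\mathrm{Tree}_2((m))$ for $m\ge1$, and $c\circ_i\circ=\partial_ic$, where $\partial_ic$ erases the $i$-th leaf of $c$ (and $\partial_1 1=\circ$). For a nonsymmetric operad of sets $\mathcal{C}$, $\Lambda(\mathbb{Q}\mathcal{C})=\bigoplus_{m\ge0}\mathbb{Q}\mathcal{C}((m))$ with bracket $[c,d]=\sum_{t=1}^{j}d\circ_tc-\sum_{s=1}^{k}c\circ_sd$ for $c\in\mathcal{C}((k))$, $d\in\mathcal{C}((j))$. *)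

(* Defs.v *)
From HB Require Import structures.
From mathcomp Require Import all_boot all_order all_algebra.
Set Implicit Arguments. Unset Strict Implicit. Unset Printing Implicit Defensive.
Import GRing.Theory.
Local Open Scope ring_scope.

(** Planar binary rooted trees; leaves are numbered 1..m from left to right. *)
Inductive tree : Type := Leaf | Node of tree & tree.

Fixpoint tree_eqb (s t : tree) : bool :=
  match s, t with
  | Leaf, Leaf => true
  | Node l r, Node l' r' => tree_eqb l l' && tree_eqb r r'
  | _, _ => false
  end.

Lemma tree_eqP : Equality.axiom tree_eqb.
Proof.
elim=> [|l IHl r IHr] [|l' r'] /=; try by constructor.
by apply: (iffP andP) => [[/IHl -> /IHr ->]|[<- <-]]; split; [apply/IHl|apply/IHr].
Qed.

HB.instance Definition _ := hasDecEq.Build tree tree_eqP.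

Fixpoint leaves (t : tree) : nat :=
  match t with Leaf => 1%N | Node l r => (leaves l + leaves r)%N end.

(** Elements of the operad Tree_2^- : [None] is the arity-0 element (circ),
    [Some t] is the tree t of arity [leaves t] (>= 1). *)
Definition optree := option tree.

Definition arity (c : optree) : nat :=
  match c with None => 0%N | Some t => leaves t end.

(** S o_i T : graft the root of T onto the i-th leaf (1-indexed) of S. *)
Fixpoint graft (s : tree) (i : nat) (t : tree) : tree :=
  match s with
  | Leaf => if i == 1%N then t else Leaf
  | Node l r => if (i <= leaves l)%N then Node (graft l i t) r
                else Node l (graft r (i - leaves l) t)
  end.

(** partial_i c : erase the i-th leaf of c (partial_1 1 = circ). *)
Fixpoint erase (s : tree) (i : nat) : optree :=
  match s with
  | Leaf => if i == 1%N then None else Some Leaf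
  | Node l r =>
      if (i <= leaves l)%N then
        match erase l i with None => Some r | Some l' => Some (Node l' r) end
      else
        match erase r (i - leaves l) with None => Some l | Some r' => Some (Node l r') end
  end.

(** Operadic composition c o_i d in Tree_2^- (only meaningful for 1 <= i <= arity c). *)
Definition comp (c : optree) (i : nat) (d : optree) : optree :=
  match c, d with
  | Some s, Some t => Some (graft s i t)
  | Some s, None => erase s i
  | None, _ => None
  end.

(** Elements of Lambda(Q Tree_2^-) as formal finite Q-linear combinations. *)
Definition vec := seq (rat * optree).

Definition coef (v : vec) (x : optree) : rat :=
  \sum_(p <- v | p.2 == x) p.1.

(** bracket of basis elements c (arity k), d (arity j):
    [c,d] = sum_{t=1}^j d o_t c - sum_{s=1}^k c o_s d *)
Definition brb (c d : optree) : vec :=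
  [seq (1, comp d t c) | t <- iota 1 (arity d)] ++
  [seq (-1, comp c s d) | s <- iota 1 (arity c)].

Definition bracket (u v : vec) : vec :=
  flatten [seq [seq (p.1 * q.1 * r.1, r.2) | r <- brb p.2 q.2] | p <- u, q <- v].

Definition vscale (a : rat) (v : vec) : vec := [seq (a * p.1, p.2) | p <- v].

Definition in_Lambda1 (v : vec) : Prop :=
  forall x, coef v x != 0 -> (2 <= arity x)%N.

(** the Lie subalgebra of Lambda(Q Tree_2^-) generated by the set S
    (vectors are identified when they have the same coefficients) *)
Inductive gen (S : seq vec) : vec -> Prop :=
  | gen_in v : v \in S -> gen S v
  | gen_zero : gen S [::]
  | gen_add u v : gen S u -> gen S v -> gen S (u ++ v)
  | gen_scale a v : gen S v -> gen S (vscale a v)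
  | gen_bracket u v : gen S u -> gen S v -> gen S (bracket u v)
  | gen_ext u v : gen S u -> (forall x, coef u x = coef v x) -> gen S v.

(* Main.v *)
Require Import Defs.
From mathcomp Require Import all_boot all_order all_algebra.
From mathcomp Require Import zify.
Set Implicit Arguments. Unset Strict Implicit. Unset Printing Implicit Defensive.
Import GRing.Theory.

Fixpoint rc (n : nat) : tree := if n is n'.+1 then Node Leaf (rc n') else Leaf.
Fixpoint is_rc (t : tree) : bool :=
  match t with Leaf => true | Node l r => (l == Leaf) && is_rc r end.

Lemma leaves_gt0 t : (0 < leaves t)%N.
Proof. elim: t => //= l IHl r IHr; lia. Qed.

Lemma leaves_rc n : leaves (rc n) = n.+1.
Proof. by elim: n => //= n ->. Qed.

Lemma is_rc_rc n : is_rc (rc n).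
Proof. by elim: n. Qed.

Lemma rc_eqE x n : (x == rc n) = is_rc x && (leaves x == n.+1).
Proof.
elim: x n => [|l IHl r IHr] [|n] //=.
- have H : (leaves l + leaves r == 1)%N = false.
    have := leaves_gt0 l; have := leaves_gt0 r; lia.
  by rewrite H andbF.
- apply/eqP/andP => [[-> E]|[/andP[/eqP -> H1] /eqP H2]].
    by rewrite E is_rc_rc leaves_rc.
  congr Node; apply/eqP; rewrite IHr H1 /=; apply/eqP; move: H2 => /=; lia.
Qed.

Lemma leaves_graft s i t : (1 <= i <= leaves s)%N ->
  leaves (graft s i t) = (leaves s + leaves t).-1.
Proof.
elim: s i => [|l IHl r IHr] i /=.
  by move=> Hi; have -> : i = 1%N by lia.
move=> Hi; case: ifP => Hil /=.
  rewrite IHl; last lia. have := leaves_gt0 l; have := leaves_gt0 t; lia.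
rewrite IHr; last lia. have := leaves_gt0 r; have := leaves_gt0 t; lia.
Qed.

Lemma graft_rc s i t : (1 <= i <= leaves s)%N -> (2 <= leaves t)%N ->
  is_rc (graft s i t) = [&& is_rc s, is_rc t & i == leaves s].
Proof.
elim: s i => [|l IHl r IHr] i /= Hi Ht.
  have -> : i = 1%N by lia.
  by rewrite /= andbT.
case: ifP => Hil /=.
  have Hg : graft l i t == Leaf = false.
    apply/negbTE/eqP => E.
    have H1 : (0 < i <= leaves l)%N by lia.
    move: (leaves_graft t H1); rewrite E /=; have := leaves_gt0 l; lia.
  rewrite Hg /=; have := leaves_gt0 r.
  case: (_ == Leaf); case: (is_rc r); case: (is_rc t) => //=; lia.
rewrite IHr; [|lia|done].
case: (_ == Leaf); case: (is_rc r); case: (is_rc t) => //=; lia.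
Qed.

Lemma cnt d c n : (2 <= leaves c)%N ->
  count (fun i => graft d i c == rc n) (iota 1 (leaves d)) =
  [&& is_rc d, is_rc c & (leaves d + leaves c).-1 == n.+1].
Proof.
move=> Hc.
set K := [&& is_rc d, is_rc c & _].
rewrite (@eq_in_count _ _ (fun i => K && (i == leaves d))); last first.
  move=> i; rewrite mem_iota => Hi.
  have Hi' : (1 <= i <= leaves d)%N by lia.
  rewrite rc_eqE graft_rc // leaves_graft // /K.
  by case: (is_rc d) (is_rc c) (i == leaves d) ((leaves d + leaves c).-1 == n.+1) => [] [] [] [].
case: K => /=; last by rewrite count_pred0.
have -> : (fun i => i == leaves d) = pred1 (leaves d) by [].
rewrite count_uniq_mem ?iota_uniq // mem_iota.
have H : (1 <= leaves d < 1 + leaves d)%N by have := leaves_gt0 d; lia.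
by rewrite H.
Qed.

Local Open Scope ring_scope.

Lemma coef_nil x : coef [::] x = 0.
Proof. by rewrite /coef big_nil. Qed.

Lemma coef_cons p v x : coef (p :: v) x = (if p.2 == x then p.1 else 0) + coef v x.
Proof. by rewrite /coef big_cons; case: ifP; rewrite ?add0r. Qed.

Lemma coef_cat u v x : coef (u ++ v) x = coef u x + coef v x.
Proof. by rewrite /coef big_cat. Qed.

Lemma coef_scale a v x : coef (vscale a v) x = a * coef v x.
Proof. by rewrite /coef big_map big_distrr. Qed.

Lemma coef_mapc (a : rat) (f : nat -> optree) (s : seq nat) x :
  coef [seq (a, f t) | t <- s] x = a * (count (fun t => f t == x) s)%:R.
Proof.
elim: s => [|t s IH] /=; first by rewrite coef_nil mulr0.
rewrite coef_cons IH /=; case: (f t == x) => /=; last by rewrite add0r.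
by rewrite natrD mulrDr mulr1.
Qed.

Lemma coef_bracket u v x :
  coef (bracket u v) x =
  \sum_(p <- u) \sum_(q <- v) p.1 * q.1 * coef (brb p.2 q.2) x.
Proof.
elim: u => [|p u IH]; first by rewrite /bracket /= coef_nil big_nil.
rewrite /bracket allpairs_cons flatten_cat coef_cat -/(bracket u v) IH big_cons.
congr (_ + _).
clear IH; elim: v => [|q v IHv]; first by rewrite /= coef_nil big_nil.
rewrite /= coef_cat IHv big_cons; congr (_ + _).
by rewrite /coef big_map big_distrr.
Qed.

Lemma sum_if (s : seq optree) (y : optree) (a : rat) (F : optree -> rat) :
  uniq s -> y \in s ->
  \sum_(b <- s) (if y == b then a else 0) * F b = a * F y.
Proof.
elim: s => [|b s IH] //= /andP[bs us]; rewrite big_cons in_cons.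
case: (eqVneq y b) => [E _|ne /= ys].
  subst y; rewrite big1_seq ?addr0 // => z /andP[_ zs].
  by case: (eqVneq b z) => [E|_]; [move: bs; rewrite E zs | rewrite mul0r].
by rewrite mul0r add0r IH.
Qed.

Lemma sum_supp (u : vec) (s : seq optree) (F : optree -> rat) :
  uniq s -> {subset map snd u <= s} ->
  \sum_(p <- u) p.1 * F p.2 = \sum_(a <- s) coef u a * F a.
Proof.
move=> us; elim: u => [|p u IH] sub.
  by rewrite big_nil big1_seq // => a _; rewrite coef_nil mul0r.
rewrite big_cons IH; last by move=> z zu; apply: sub; rewrite /= in_cons zu orbT.
under [in RHS]eq_bigr => a _ do rewrite coef_cons mulrDl.
rewrite big_split /= sum_if //; apply: sub; by rewrite /= in_cons eqxx.
Qed.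

Lemma bil (u v : vec) (G : optree -> optree -> rat) :
  in_Lambda1 u -> in_Lambda1 v ->
  (forall a b, (2 <= arity a)%N -> (2 <= arity b)%N -> G a b = 0) ->
  \sum_(p <- u) \sum_(q <- v) p.1 * q.1 * G p.2 q.2 = 0.
Proof.
move=> Hu Hv HG.
under eq_bigr => p _ do under eq_bigr => q _ do rewrite -mulrA.
under eq_bigr => p _ do rewrite -big_distrr /=.
rewrite (@sum_supp u (undup (map snd u)) (fun a => \sum_(q <- v) q.1 * G a q.2));
  [|exact: undup_uniq|by move=> z; rewrite mem_undup].
apply: big1_seq => a _.
have [->|na] := eqVneq (coef u a) 0; first by rewrite mul0r.
rewrite (@sum_supp v (undup (map snd v)) (fun b => G a b));
  [|exact: undup_uniq|by move=> z; rewrite mem_undup].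
rewrite big1_seq ?mulr0 // => b _.
have [->|nb] := eqVneq (coef v b) 0; first by rewrite mul0r.
by rewrite HG ?mulr0 //; [apply: Hu | apply: Hv].
Qed.

Lemma arity_Some_graft t i s : (1 <= i <= leaves t)%N ->
  arity (Some (graft t i s)) = (leaves t + leaves s).-1.
Proof. exact: leaves_graft. Qed.

Lemma brb_coef a b x : (2 <= arity a)%N -> (2 <= arity b)%N ->
  coef (brb a b) x =
  (count (fun i => Defs.comp b i a == x) (iota 1 (arity b)))%:R -
  (count (fun i => Defs.comp a i b == x) (iota 1 (arity a)))%:R.
Proof.
move=> _ _; rewrite /brb coef_cat !coef_mapc mul1r.
by rewrite mulN1r.
Qed.

Lemma brb_low a b x : (2 <= arity a)%N -> (2 <= arity b)%N -> (arity x < 2)%N ->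
  coef (brb a b) x = 0.
Proof.
move=> Ha Hb Hx; rewrite brb_coef //.
case: a Ha => [s|] //= Hs; case: b Hb => [t|] //= Ht.
rewrite !(@eq_in_count _ _ pred0) ?count_pred0 ?subrr // => i;
  rewrite mem_iota => Hi /=; apply/negbTE/eqP => E; move: Hx; rewrite -E /=.
- have Hi' : (1 <= i <= leaves s)%N by lia.
  rewrite leaves_graft //; lia.
- have Hi' : (1 <= i <= leaves t)%N by lia.
  rewrite leaves_graft //; lia.
Qed.

Lemma brb_X a b n : (2 <= arity a)%N -> (2 <= arity b)%N ->
  coef (brb a b) (Some (rc n)) = 0.
Proof.
move=> Ha Hb; rewrite brb_coef //.
case: a Ha => [s|] //= Hs; case: b Hb => [t|] //= Ht.
have E1 : count (fun i => Some (graft t i s) == Some (rc n)) (iota 1 (leaves t))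
  = count (fun i => graft t i s == rc n) (iota 1 (leaves t)) by [].
have E2 : count (fun i => Some (graft s i t) == Some (rc n)) (iota 1 (leaves s))
  = count (fun i => graft s i t == rc n) (iota 1 (leaves s)) by [].
rewrite E1 E2 !cnt // addnC.
by case: (is_rc s) (is_rc t) => [] []; rewrite /= ?subrr.
Qed.

Lemma mem_leq_sum (T : eqType) (s : seq T) (F : T -> nat) x :
  x \in s -> (F x <= \sum_(y <- s) F y)%N.
Proof.
elim: s => [|y s IH] //; rewrite in_cons big_cons => /orP[/eqP ->|xs].
  exact: leq_addr.
exact: leq_trans (IH xs) (leq_addl _ _).
Qed.

Theorem corollary5p3 :
  ~ exists S : seq vec,
      (forall s, s \in S -> in_Lambda1 s) /\
      (forall v, in_Lambda1 v -> gen S v).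
Proof.
move=> [S [HS Hall]].
pose N := (\sum_(s <- S) \sum_(p <- s) arity p.2)%N.
pose X : optree := Some (rc N.+1).
have inv : forall v, gen S v -> in_Lambda1 v /\ coef v X = 0.
  move=> v; elim => {v}.
  - move=> v vS; split; first exact: HS.
    rewrite /coef big1_seq // => p /andP[/eqP pX pv].
    have := mem_leq_sum (fun p : rat * optree => arity p.2) pv.
    have := mem_leq_sum (fun s : vec => \sum_(p <- s) arity p.2) vS.
    rewrite pX /X /= leaves_rc -/N => h1 h2.
    have := leq_trans h2 h1; lia.
  - by split; [move=> x; rewrite coef_nil eqxx | rewrite coef_nil].
  - move=> u v _ [Hu cu] _ [Hv cv]; split; last by rewrite coef_cat cu cv addr0.
    move=> x; rewrite coef_cat.
    have [u0|/Hu //] := eqVneq (coef u x) 0.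
    by rewrite u0 add0r => /Hv.
  - move=> a v _ [Hv cv]; split; last by rewrite coef_scale cv mulr0.
    move=> x; rewrite coef_scale.
    have [v0|/Hv //] := eqVneq (coef v x) 0.
    by rewrite v0 mulr0 eqxx.
  - move=> u v _ [Hu _] _ [Hv _]; split.
      move=> x; rewrite leqNgt; apply: contra => Hx.
      rewrite coef_bracket (@bil u v (fun a b => coef (brb a b) x)) //.
      by move=> a b Ha Hb; apply: brb_low.
    rewrite coef_bracket (@bil u v (fun a b => coef (brb a b) X)) //.
    by move=> a b Ha Hb; apply: brb_X.
  - move=> u v _ [Hu cu] E; split; last by rewrite -E.
    by move=> x; rewrite -E => /Hu.
have H1 : in_Lambda1 [:: (1, X)].
  move=> x; rewrite coef_cons coef_nil addr0 /=.
  case: (eqVneq X x) => [<- _|_]; last by rewrite eqxx.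
  by rewrite /X /= leaves_rc.
have [_] := inv _ (Hall _ H1).
by rewrite coef_cons coef_nil addr0 eqxx.
Qed.
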